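(* Let $n\ge1$ and let $\mathcal{A},\mathcal{B}\subseteq D_n$. Then $\mathcal{A}$ and $\mathcal{B}$ are right-homometric if and only if $$\mathbf{iv}(A_+)+\mathbf{iv}(A_-)=\mathbf{iv}(B_+)+\mathbf{iv}(B_-)\quad\text{and}\quad \mathbf{ifunc}(A_+,A_-)=\mathbf{ifunc}(B_+,B_-).$$ Moreover, $\mathcal{A}$ and $\mathcal{B}$ are left-homometric if and only if $$\mathbf{iv}(A_+)+\mathbf{iv}(A_-)=\mathbf{iv}(B_+)+\mathbf{iv}(B_-)\quad\text{and}\quad \mathbf{ifunc}(I_0A_+,A_-)=\mathbf{ifunc}(I_0B_+,B_-).$$ (All equalities are equalities of functions $\mathbb{Z}_n\to\mathbb{Z}_{\ge0}$.)
   Context: $D_n$ is the set of pairs $(k,\epsilon)$, $k\in\mathbb{Z}_n$, $\epsilon\in\{1,-1\}$, with multiplication $(k,\epsilon)(l,\eta)=(k+\epsilon l,\epsilon\eta)$. Right interval: ${}^r\mathbf{int}(x,y)=x^{-1}y$, i.e. ${}^r\mathbf{int}((k_1,\epsilon_1),(k_2,\epsilon_2))=((k_2-k_1)/\epsilon_1,\epsilon_2/\epsilon_1)$; left interval: ${}^l\mathbf{int}(x,y)=yx^{-1}$, i.e. $(k_2-(\epsilon_2/\epsilon_1)k_1,\epsilon_2/\epsilon_1)$. For $\mathcal{A}\subseteq D_n$ and $g\in D_n$, ${}^r\mathbf{iv}(\mathcal{A})(g)=\#\{(x,y)\in\mathcal{A}^2: {}^r\mathbf{int}(x,y)=g\}$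 and ${}^l\mathbf{iv}(\mathcal{A})(g)=\#\{(x,y)\in\mathcal{A}^2:{}^l\mathbf{int}(x,y)=g\}$. Two subsets of $D_n$ are right-homometric (resp. left-homometric) if they have the same ${}^r\mathbf{iv}$ (resp. ${}^l\mathbf{iv}$). For $\mathcal{A}\subseteq D_n$ put $A_+=\{k\in\mathbb{Z}_n:(k,1)\in\mathcal{A}\}$ and $A_-=\{k\in\mathbb{Z}_n:(k,-1)\in\mathcal{A}\}$ (similarly $B_\pm$ for $\mathcal{B}$). For $A,B\subseteq\mathbb{Z}_n$: $\mathbf{ifunc}(A,B)(k)=\#\{(a,b)\in A\times B: b-a=k\}$, $\mathbf{iv}(A)=\mathbf{ifunc}(A,A)$, and $I_0A=\{-a:a\in A\}$. *)

(* Defs.v *)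
(* Z_n is modelled by the ordinals 'I_n with arithmetic mod n
   carried out on nat values; this works uniformly for every n >= 1
   (avoiding 'Z_n, which is degenerate for n = 1). *)
From mathcomp Require Import all_boot.
Set Implicit Arguments. Unset Strict Implicit. Unset Printing Implicit Defensive.

Definition zadd (n a b : nat) : nat := (a + b) %% n.
Definition zneg (n a : nat) : nat := (n - a %% n) %% n.
Definition zsub (n a b : nat) : nat := zadd n a (zneg n b).

(* Elements of D_n: pairs (k, s) with k : 'I_n, and sign s : bool,
   where s = true encodes epsilon = 1 and s = false encodes epsilon = -1.
   Computations are done on representatives (nat * bool). *)
Definition Dn (n : nat) := ('I_n * bool)%type.
Definition drep n (x : Dn n) : nat * bool := (val x.1, x.2).

Definition sact (n : nat) (e : bool) (l : nat) : nat := if e then l %% n else zneg n l.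
Definition smul (e f : bool) : bool := e == f.

Definition dmul (n : nat) (x y : nat * bool) : nat * bool :=
  (zadd n x.1 (sact n x.2 y.1), smul x.2 y.2).
Definition dinv (n : nat) (x : nat * bool) : nat * bool :=
  (zneg n (sact n x.2 x.1), x.2).

Definition rint n (x y : Dn n) : nat * bool := dmul n (dinv n (drep x)) (drep y).
Definition lint n (x y : Dn n) : nat * bool := dmul n (drep y) (dinv n (drep x)).

Definition riv n (A : {set Dn n}) (g : Dn n) : nat :=
  #|[set xy : Dn n * Dn n | (xy.1 \in A) && (xy.2 \in A) && (rint xy.1 xy.2 == drep g)]|.
Definition liv n (A : {set Dn n}) (g : Dn n) : nat :=
  #|[set xy : Dn n * Dn n | (xy.1 \in A) && (xy.2 \in A) && (lint xy.1 xy.2 == drep g)]|.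

Definition rhomometric n (A B : {set Dn n}) : Prop := forall g, riv A g = riv B g.
Definition lhomometric n (A B : {set Dn n}) : Prop := forall g, liv A g = liv B g.

Definition Aplus n (A : {set Dn n}) : {set 'I_n} := [set k | (k, true) \in A].
Definition Aminus n (A : {set Dn n}) : {set 'I_n} := [set k | (k, false) \in A].

Definition ifunc n (A B : {set 'I_n}) (k : 'I_n) : nat :=
  #|[set ab : 'I_n * 'I_n | (ab.1 \in A) && (ab.2 \in B) && (zsub n ab.2 ab.1 == val k)]|.
Definition iv n (A : {set 'I_n}) : 'I_n -> nat := ifunc A A.

Definition I0 n (A : {set 'I_n}) : {set 'I_n} :=
  [set k : 'I_n | [exists a in A, val k == zneg n (val a)]].

(* Main.v *)
Require Import Defs.
From mathcomp Require Import all_boot.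
Set Implicit Arguments. Unset Strict Implicit.
From Stdlib Require Import Lia.
From mathcomp Require Import zify.

Lemma card_pairs (T1 T2 : finType) (P : T1 * T2 -> bool) :
  #|[set p | P p]| = \sum_a \sum_b (P (a, b) : nat).
Proof.
rewrite -sum1dep_card big_mkcond /= pair_bigA /=.
by apply: eq_bigr => -[a b] _; case: (P (a,b)).
Qed.

Lemma sum_pb (T : finType) (F : T * bool -> nat) :
  \sum_x F x = \sum_k (F (k, true) + F (k, false)).
Proof.
rewrite (eq_bigr (fun p => F (p.1, p.2))); last by case.
rewrite -(pair_bigA _ (fun k e => F (k, e))) /=.
by apply: eq_bigr => k _; rewrite big_bool.
Qed.

Lemma zneg_zneg n a : 0 < n -> zneg n (zneg n a) = a %% n.
Proof.
move=> n0; rewrite /zneg.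
have := ltn_pmod a n0; set r := a %% n => hr.
case: (posnP r) => [->|r0].
  by rewrite subn0 modnn mod0n subn0 modnn.
have h1 : (n - r) %% n = n - r by apply: modn_small; rewrite ltn_subrL n0 r0.
rewrite h1 h1 (subKn (ltnW hr)). exact: modn_small.
Qed.

Section S.
Variable n : nat.
Hypothesis n0 : 0 < n.

Lemma znegmod a : zneg n a %% n = zneg n a.
Proof. by rewrite /zneg modn_mod. Qed.
Lemma zneg_mod a : zneg n (a %% n) = zneg n a.
Proof. by rewrite /zneg modn_mod. Qed.

Lemma R1 k1 k2 : zadd n (zneg n (sact n true k1)) (sact n true k2) = zsub n k2 k1.
Proof. by rewrite /= zneg_mod /zsub /zadd modnDmr addnC. Qed.
Lemma R2 k1 k2 : zadd n (zneg n (sact n false k1)) (sact n false k2) = zsub n k1 k2.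
Proof. by rewrite /= zneg_zneg // /zsub /zadd modnDml. Qed.
Lemma L1 k1 k2 : zadd n k2 (sact n true (zneg n (sact n true k1))) = zsub n k2 k1.
Proof. by rewrite /= znegmod zneg_mod. Qed.
Lemma L2 k1 k2 : zadd n k2 (sact n false (zneg n (sact n false k1))) = zsub n k2 k1.
Proof. by rewrite /= zneg_zneg // znegmod. Qed.
Lemma L3 k1 k2 : zadd n k2 (sact n false (zneg n (sact n true k1))) = (k2 + k1) %% n.
Proof. by rewrite /= zneg_zneg // modn_mod /zadd modnDmr. Qed.
Lemma L4 k1 k2 : zadd n k2 (sact n true (zneg n (sact n false k1))) = (k2 + k1) %% n.
Proof. by rewrite /= zneg_zneg // modn_mod /zadd modnDmr. Qed.

Lemma R1' k1 k2 : zadd n (zneg n (k1 %% n)) (k2 %% n) = zsub n k2 k1.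
Proof. exact: (R1 k1 k2). Qed.
Lemma R2' k1 k2 : zadd n (zneg n (zneg n k1)) (zneg n k2) = zsub n k1 k2.
Proof. exact: (R2 k1 k2). Qed.

Lemma rivP (A : {set Dn n}) k :
  riv A (k, true) = iv (Aplus A) k + iv (Aminus A) k.
Proof.
rewrite /riv /iv /ifunc !card_pairs sum_pb.
under eq_bigr => x _ do rewrite !sum_pb.
rewrite /rint /dmul /dinv /drep /= [X in _ = _ + X]exchange_big -big_split /=.
apply: eq_bigr => a _; rewrite -!big_split /=; apply: eq_bigr => b _.
rewrite /smul /= !xpair_eqE R1' R2' !inE /= !andbT !andbF addn0 add0n.
by rewrite (andbC ((b, false) \in A)).
Qed.

Lemma rivM (A : {set Dn n}) k :
  riv A (k, false) = ifunc (Aplus A) (Aminus A) k + ifunc (Aplus A) (Aminus A) k.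
Proof.
rewrite /riv /iv /ifunc !card_pairs sum_pb.
under eq_bigr => x _ do rewrite !sum_pb.
rewrite /rint /dmul /dinv /drep /= [X in _ = _ + X]exchange_big -big_split /=.
apply: eq_bigr => a _; rewrite -!big_split /=; apply: eq_bigr => b _.
rewrite /smul /= !xpair_eqE R1' R2' !inE /= !andbT !andbF addn0 add0n.
by rewrite (andbC ((b, true) \in A)).
Qed.
Lemma L1' k1 k2 : zadd n k2 (zneg n (k1 %% n) %% n) = zsub n k2 k1.
Proof. exact: (L1 k1 k2). Qed.
Lemma L2' k1 k2 : zadd n k2 (zneg n (zneg n (zneg n k1))) = zsub n k2 k1.
Proof. exact: (L2 k1 k2). Qed.

Definition negI (i : 'I_n) : 'I_n := Ordinal (ltn_pmod (n - i %% n) n0).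

Lemma negIK : involutive negI.
Proof.
move=> i; apply: val_inj => /=.
rewrite -[RHS](modn_small (ltn_ord i)); exact: (zneg_zneg i n0).
Qed.

Lemma negI_I0 (P : {set 'I_n}) c : (negI c \in I0 P) = (c \in P).
Proof.
rewrite /I0 inE; apply/existsP/idP.
  case=> a /andP [aP /eqP h].
  have e : negI c = negI a by apply: val_inj.
  by rewrite (can_inj negIK e).
by move=> cP; exists c; rewrite cP /=; apply/eqP.
Qed.

Lemma ifuncI0 (P Q : {set 'I_n}) k :
  ifunc (I0 P) Q k = \sum_a \sum_b ((a \in P) && (b \in Q) && ((b + a) %% n == k)).
Proof.
rewrite /ifunc card_pairs (reindex_inj (inv_inj negIK)) /=.
apply: eq_bigr => a _; apply: eq_bigr => b _.
rewrite negI_I0 /zsub /zadd.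
have -> : zneg n (negI a) = a by rewrite (zneg_zneg a n0) modn_small.
by [].
Qed.

Lemma livP (A : {set Dn n}) k :
  liv A (k, true) = iv (Aplus A) k + iv (Aminus A) k.
Proof.
rewrite /liv /iv /ifunc !card_pairs sum_pb.
under eq_bigr => x _ do rewrite !sum_pb.
rewrite /lint /dmul /dinv /drep /= -big_split /=.
apply: eq_bigr => a _; rewrite -!big_split /=; apply: eq_bigr => b _.
rewrite /smul /= !xpair_eqE !inE /= !andbT !andbF addn0 add0n.
by rewrite L1' L2'.
Qed.
Lemma L3' k1 k2 : zadd n k2 (zneg n (zneg n (k1 %% n))) = (k2 + k1) %% n.
Proof. exact: (L3 k1 k2). Qed.
Lemma L4' k1 k2 : zadd n k2 (zneg n (zneg n k1) %% n) = (k2 + k1) %% n.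
Proof. exact: (L4 k1 k2). Qed.

Lemma livM (A : {set Dn n}) k :
  liv A (k, false) = ifunc (I0 (Aplus A)) (Aminus A) k + ifunc (I0 (Aplus A)) (Aminus A) k.
Proof.
rewrite !ifuncI0 /liv card_pairs sum_pb.
under eq_bigr => x _ do rewrite !sum_pb.
rewrite /lint /dmul /dinv /drep /= [X in _ = _ + X]exchange_big -big_split /=.
apply: eq_bigr => a _; rewrite -!big_split /=; apply: eq_bigr => b _.
rewrite /smul /= !xpair_eqE !inE /= !andbT !andbF addn0 add0n.
rewrite L3' L4' (addnC a b).
by rewrite (andbC ((b, true) \in A)).
Qed.

End S.

Theorem mainTheorem2 (n : nat) (hn : 1 <= n) (A B : {set Dn n}) :
  (rhomometric A B <->
     ((forall k : 'I_n, iv (Aplus A) k + iv (Aminus A) k = iv (Aplus B) k + iv (Aminus B) k)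
      /\ (forall k : 'I_n, ifunc (Aplus A) (Aminus A) k = ifunc (Aplus B) (Aminus B) k)))
  /\
  (lhomometric A B <->
     ((forall k : 'I_n, iv (Aplus A) k + iv (Aminus A) k = iv (Aplus B) k + iv (Aminus B) k)
      /\ (forall k : 'I_n, ifunc (I0 (Aplus A)) (Aminus A) k = ifunc (I0 (Aplus B)) (Aminus B) k))).
Proof.
split; split.
- move=> H; split=> k.
    by rewrite -!rivP //; apply: H.
  have := H (k, false); rewrite !rivM //; lia.
- by case=> H1 H2 [k []]; rewrite ?rivP ?rivM // ?H1 ?H2.
- move=> H; split=> k.
    by rewrite -!livP //; apply: H.
  have := H (k, false); rewrite !livM //; lia.
- by case=> H1 H2 [k []]; rewrite ?livP ?livM // ?H1 ?H2.
Qed.
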